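(* Let $n$, $q\ge2$ and $a\in[1:n]$ be integers, and $\nu=\lceil (n+1)/a\rceil$. For any $\mathbf{l}=(l_1,\dots,l_{q-1})\in[1:\nu]^{q-1}$, the cell $$C_{\mathbf{l}}=\{\mathbf{t}\in\mathcal{N}_{q,n}:(l_i-1)a\le t_i\le l_ia-1\ \ \forall i\in[1:q-1]\}$$ is non-empty if and only if $q-1\le\sum_{i=1}^{q-1}l_i\le\frac na+(q-1)$.
   Context: $\mathcal{N}_{q,n}=\{\mathbf{t}\in\mathbb{Z}_{\ge0}^q:\sum_{i=1}^qt_i=n\}$. *)

(* Defs.v *)
From mathcomp Require Import all_boot all_order all_algebra.
Set Implicit Arguments. Unset Strict Implicit. Unset Printing Implicit Defensive.

Definition ceil_div (m d : nat) : nat := (m + d - 1) %/ d.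

Definition nu (n a : nat) : nat := ceil_div n.+1 a.

(* t in N_{q,n}: t = (t_1,...,t_q) (coordinates 1..q of t : nat -> nat),
   nonnegative integers summing to n *)
Definition in_Nqn (q n : nat) (t : nat -> nat) : Prop :=
  \sum_(1 <= i < q.+1) t i = n.

Definition in_cell (q n a : nat) (l t : nat -> nat) : Prop :=
  in_Nqn q n t /\
  forall i, 1 <= i <= q - 1 -> (l i - 1) * a <= t i <= l i * a - 1.

(* Main.v *)
Require Import Defs.
From mathcomp Require Import all_boot all_order all_algebra.
Import Order.TTheory GRing.Theory Num.Theory.

Theorem lemma12 (n q a : nat) (l : nat -> nat) :
  (2 <= n)%N -> (2 <= q)%N -> (1 <= a <= n)%N ->
  (forall i, (1 <= i <= q - 1)%N -> (1 <= l i <= nu n a)%N) ->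
  ((exists t : nat -> nat, in_cell q n a l t) <->
   ((q - 1 <= \sum_(1 <= i < q) l i)%N /\
    ((\sum_(1 <= i < q) l i)%:R <= (n%:R / a%:R + (q - 1)%:R : rat))%R)).
Proof.
move=> hn hq /andP[ha han] hl.
have hl1 : forall i, (1 <= i < q)%N -> (1 <= l i)%N.
  move=> i /andP[h1 h2].
  have H : (1 <= i <= q - 1)%N.
    by rewrite h1 /=; rewrite leq_subRL ?add1n //; apply: leq_trans hq.
  by case/andP: (hl i H).
set D := \sum_(1 <= i < q) (l i - 1).
have hS : \sum_(1 <= i < q) l i = (D + (q - 1))%N.
  rewrite /D -[q - 1]muln1 -sum_nat_const_nat -big_split /=.
  rewrite big_nat_cond [RHS]big_nat_cond; apply: eq_bigr => i /andP[hi _].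
  by rewrite subnK // hl1.
have hDa : \sum_(1 <= i < q) (l i - 1) * a = (D * a)%N.
  by rewrite /D big_distrl.
have key : ((\sum_(1 <= i < q) l i)%:R <= (n%:R / a%:R + (q - 1)%:R : rat))%R
           = (D * a <= n)%N.
  rewrite hS natrD lerD2r ler_pdivlMr ?ltr0n // -natrM ler_nat; done.
rewrite key hS leq_addl; split.
- move=> [t [ht hc]]; split => //.
  rewrite -hDa -ht /in_Nqn.
  rewrite big_nat_recr /=; last by apply: leq_trans hq.
  apply: leq_trans (leq_addr _ _).
  rewrite big_nat_cond [X in (_ <= X)%N]big_nat_cond; apply: leq_sum => i /andP[/andP[h1 h2] _].
  have H : (1 <= i <= q - 1)%N.
    by rewrite h1 /= leq_subRL ?add1n //; apply: leq_trans hq.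
  by case/andP: (hc i H).
- move=> [_ hD].
  exists (fun i => if (i < q)%N then (l i - 1) * a else (n - D * a)%N).
  split.
  + rewrite /in_Nqn big_nat_recr /=; last by apply: leq_trans hq.
    rewrite ltnn.
    rewrite (@eq_big_nat _ _ _ 1 q _ (fun i => (l i - 1) * a)%N); last first.
      by move=> i /andP[_ ->].
    by rewrite hDa subnKC.
  + move=> i /andP[h1 h2].
    have hiq : (i < q)%N by move: h2 hq; case: (q) => // q' h _; move: h; rewrite subSS subn0 ltnS.
    rewrite hiq leqnn /=.
    have := hl1 i; rewrite h1 hiq => /(_ isT) hli.
    by rewrite mulnBl mul1n leq_sub2l.
Qed.
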